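(* Let $k\ge 3$, $n_1=\cdots=n_k\ge 2$ and $r\in[k]$. The number of distinct isomorphism classes of graphs in the LC orbit $\mathcal{O}(CS^r_{n_1,\dots,n_k})$ is $\lceil k/2\rceil+k$.
   Context: The clique-star $CS^r_{n_1,\dots,n_k}$ has vertex set $U_1\sqcup\cdots\sqcup U_k$ with $|U_i|=n_i$; each $U_i$ is a clique, every vertex of $U_r$ is adjacent to every vertex of each $U_i$ with $i\ne r$, and there are no edges between $U_i$ and $U_l$ for distinct $i,l\ne r$. The local complement $c_v(G)$ complements the edges among the neighbours of $v$; $\mathcal{O}(G)$ is the set of all graphs on the labelled vertex set obtainable from $G$ by finite sequences of local complements. *)

(* Defs.v *)
From mathcomp Require Import all_boot all_fingroup.
Set Implicit Arguments. Unset Strict Implicit. Unset Printing Implicit Defensive.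

(* A graph on a finite labelled vertex set T is represented by its set of
   ordered adjacent pairs (both orientations present, no loops). *)
Definition graph (T : finType) := {set (T * T)}.

Definition lc (T : finType) (v : T) (G : graph T) : graph T :=
  [set e | (e \in G) (+) [&& e.1 != e.2, (v, e.1) \in G & (v, e.2) \in G]].

Definition lc_step (T : finType) : rel (graph T) :=
  fun G H => [exists v : T, H == lc v G].

Definition lc_orbit (T : finType) (G : graph T) : {set graph T} :=
  [set H | connect (@lc_step T) G H].

Definition graph_iso (T : finType) (G H : graph T) : bool :=
  [exists p : {perm T}, [forall x : T, forall y : T,
     ((x, y) \in G) == ((p x, p y) \in H)]].

Definition iso_classes (T : finType) (S : {set graph T}) : {set {set graph T}} :=
  [set [set H in S | graph_iso G H] | G in S].

(* Clique-star CS^r_{n,...,n} with k parts each of size n; vertex (i, j)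
   lies in part U_i. *)
Definition clique_star (k n : nat) (r : 'I_k) : graph ('I_k * 'I_n)%type :=
  [set e | [&& e.1 != e.2 &
             [|| e.1.1 == e.2.1, e.1.1 == r | e.2.1 == r]]].
Arguments clique_star : clear implicits.

(* Main.v *)
Require Import Defs.
From mathcomp Require Import all_boot all_fingroup.
From mathcomp Require Import zify.
Set Implicit Arguments. Unset Strict Implicit. Unset Printing Implicit Defensive.

Definition adjC {n} (L : option (option 'I_n)) (p q : option 'I_n) : bool :=
  if L is Some c then (p == c) || (q == c) else true.
Definition adjS {k} (b : option 'I_k) (i l : 'I_k) : bool :=
  if b is Some c then (i == c) || (l == c) else true.
Definition edgeG {k n} (a : 'I_k -> option (option 'I_n)) (b : option 'I_k)
  (x y : ('I_k * 'I_n)%type) : bool :=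
  if x.1 == y.1 then adjC (a x.1) (Some x.2) (Some y.2)
  else [&& adjC (a x.1) (Some x.2) None, adjS b x.1 y.1 & adjC (a y.1) None (Some y.2)].
Definition gof {k n} (a : 'I_k -> option (option 'I_n)) (b : option 'I_k) : graph ('I_k * 'I_n)%type :=
  [set e | (e.1 != e.2) && edgeG a b e.1 e.2].
Definition lcq {n} (L : option (option 'I_n)) (q : option 'I_n) :=
  if L is Some c then (if c == q then None else L) else Some q.
Definition lcS {k} (b : option 'I_k) (i : 'I_k) :=
  if b is Some c then (if c == i then None else b) else Some i.
Definition stepA {k n} (a : 'I_k -> option (option 'I_n)) (b : option 'I_k) (v : ('I_k * 'I_n)%type) :=
  fun l => if l == v.1 then lcq (a l) (Some v.2)
           else if adjC (a v.1) None (Some v.2) && adjS b v.1 l then lcq (a l) None else a l.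
Definition stepB {k n} (a : 'I_k -> option (option 'I_n)) (b : option 'I_k) (v : ('I_k * 'I_n)%type) :=
  if adjC (a v.1) None (Some v.2) then lcS b v.1 else b.

Lemma Some_eqE (T : eqType) (x y : T) : (Some x == Some y) = (x == y). Proof. by []. Qed.
Lemma SN_eqE (T : eqType) (x : T) : (Some x == None) = false. Proof. by []. Qed.
Lemma NS_eqE (T : eqType) (x : T) : (None == Some x) = false. Proof. by []. Qed.
Ltac spl := repeat (rewrite ?Some_eqE ?SN_eqE ?NS_eqE /=; match goal with
  | H : is_true (?x != ?x) |- _ => by rewrite eqxx in H
  | |- context [?x == ?y] =>
      case: (eqVneq x y) => [?|?]; subst; rewrite ?eqxx /=
  | H : is_true (?x != ?y) |- context [?x == ?y] => rewrite (negbTE H) /=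
  | H : is_true (?x != ?y) |- context [?y == ?x] => rewrite eq_sym (negbTE H) /=
  end).

Lemma lc_gof k n (a : 'I_k -> option (option 'I_n)) b v :
  lc v (gof a b) = gof (stepA a b v) (stepB a b v).
Proof.
apply/setP => -[[i1 j1] [i2 j2]]; case: v => i0 j0.
rewrite !inE /= /edgeG /stepA /stepB /= !xpair_eqE.
spl.
all: repeat (match goal with
  | |- context [?f ?i] => is_var f; is_var i; lazymatch type of f with ordinal _ -> option (option _) => case: (f i) => [[?|]|] end
  | b : option (ordinal _) |- _ => case: b => [?|]
  end; rewrite /= /lcq /lcS /adjS /adjC /=; spl).
all: try by rewrite ?SN_eqE ?NS_eqE.
Qed.

Lemma eq_gof k n (a a' : 'I_k -> option (option 'I_n)) b : a =1 a' -> gof a b = gof a' b.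
Proof. by move=> E; apply/setP => -[x y]; rewrite !inE /edgeG !E. Qed.

Lemma cs_gof k n (r : 'I_k) : clique_star k n r = gof (fun _ => None) (Some r).
Proof.
apply/setP => -[x y]; rewrite !inE /edgeG /=.
by case: (x.1 == y.1); rewrite ?andbT ?orbT.
Qed.

Definition isL {n} (L : option (option 'I_n)) := if L is Some (Some _) then true else false.
Definition leafset {k n} (a : 'I_k -> option (option 'I_n)) := [set i | isL (a i)].
Definition Inv {k n} (a : 'I_k -> option (option 'I_n)) (b : option 'I_k) : Prop :=
 match b with
 | Some c => (a c = None \/ a c = Some None) /\ (forall l, l != c -> a l = None \/ isL (a l))
             /\ ((a c == None) = ~~ odd #|leafset a|)
 | None => (forall l, a l = Some None \/ isL (a l)) /\ odd #|leafset a|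
 end.

Lemma leafset_eq k n (a a' : 'I_k -> option (option 'I_n)) :
  (forall l, isL (a' l) = isL (a l)) -> leafset a' = leafset a.
Proof. by move=> E; apply/setP => l; rewrite !inE E. Qed.

Lemma leafset_add k n (a a' : 'I_k -> option (option 'I_n)) i :
  isL (a' i) -> ~~ isL (a i) -> (forall l, l != i -> isL (a' l) = isL (a l)) ->
  #|leafset a'| = (#|leafset a|).+1.
Proof.
move=> H1 H2 H3; have -> : leafset a' = i |: leafset a.
  apply/setP => l; rewrite !inE; case: (eqVneq l i) => [->|li] /=; first by rewrite H1.
  by rewrite H3.
by rewrite cardsU1 inE (negbTE H2).
Qed.

Lemma isL_lcqN n (L : option (option 'I_n)) : isL L -> lcq L None = L.
Proof. by case: L => [[j|]|]. Qed.

Lemma isL_lcq n (L : option (option 'I_n)) : isL (lcq L None) = isL L.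
Proof. by case: L => [[j|]|]. Qed.
Lemma lcqN_KL n (L : option (option 'I_n)) : L = None \/ isL L -> lcq L None = Some None \/ isL (lcq L None).
Proof. by case: L => [[j|]|] //= [] //; [right|left]. Qed.
Lemma lcqN_ML n (L : option (option 'I_n)) : L = Some None \/ isL L -> lcq L None = None \/ isL (lcq L None).
Proof. by case: L => [[j|]|] //= [] //; [right|left]. Qed.

Lemma Inv_step k n (a : 'I_k -> option (option 'I_n)) b v :
  Inv a b -> Inv (stepA a b v) (stepB a b v).
Proof.
case: v => i j; rewrite /stepA /stepB /=.
case: b => [c|] /=.
- move=> [Hc [Hl Hp]].
  have [<-{i} | ic] := eqVneq c i.
  + case: Hc => Hc; rewrite Hc /=.
    * split.
        move=> l; case: (eqVneq l c) => [->|lc]; rewrite ?eqxx ?Hc /=; first by right.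
        rewrite ?(negbTE lc) /= ?eqxx /=.
        exact: (lcqN_KL (Hl l lc)).
      rewrite (@leafset_add _ _ a _ c) /=; last first.
      - by move=> l lc; rewrite ?(negbTE lc) /= ?eqxx /=; by rewrite isL_lcq.
      - by rewrite Hc.
      - by rewrite ?eqxx Hc.
      by rewrite /= -Hp Hc.
    * split.
        move=> l; case: (eqVneq l c) => [->|lc]; rewrite ?eqxx ?Hc /=; first by left.
        rewrite ?(negbTE lc) /= ?eqxx /=.
        exact: (lcqN_KL (Hl l lc)).
      rewrite (@leafset_eq _ _ a); first by move: Hp; rewrite Hc /= => /esym/negbFE.
      move=> l; case: (eqVneq l c) => [->|lc]; rewrite ?eqxx ?Hc //=.
      by rewrite ?(negbTE lc) /= ?eqxx /=; by rewrite isL_lcq.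
  + have ci : i != c by rewrite eq_sym.
    case: (Hl i ci) => [Hi|].
    * rewrite Hi /= ?(negbTE ic) ?(negbTE ci) ?(eq_sym i c) ?(negbTE ic) ?(negbTE ci) /=.
      split; [|split].
      - rewrite ?(eq_sym c i) ?(negbTE ic) ?(negbTE ci) ?eqxx /=.
        by case: Hc => ->; [right|left].
      - move=> l lc; case: (eqVneq l i) => [->|li]; first by rewrite ?eqxx Hi; right.
        rewrite ?(negbTE li) /= ?(eq_sym i c) ?(negbTE ic) ?(negbTE ci) ?(negbTE lc) /=.
        exact: Hl.
      - rewrite ?(eq_sym c i) ?(negbTE ic) ?(negbTE ci) /=.
        rewrite (@leafset_add _ _ a _ i) /=; last first.
        + move=> l li; rewrite ?(negbTE li) /= ?(eq_sym i c) ?(negbTE ic) ?(negbTE ci) /=.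
          case: (eqVneq l c) => [->|lc] //=.
          by case: Hc => ->.
        + by rewrite Hi.
        + by rewrite ?eqxx Hi.
        by case: Hc Hp => -> /=; rewrite ?eqxx => <-.
    * case Ei: (a i) => [[j'|]|] //= _.
      case: (eqVneq j' j) => [<-{j}|jj].
      - rewrite ?eqxx /= ?(negbTE ic) ?(negbTE ci) ?(eq_sym i c) ?(negbTE ic) ?(negbTE ci) /=.
        split; [|split].
        + rewrite ?(eq_sym c i) ?(negbTE ic) ?(negbTE ci) ?eqxx /=.
          by case: Hc => ->; [right|left].
        + move=> l lc; case: (eqVneq l i) => [->|li]; first by rewrite ?eqxx Ei /= ?eqxx; left.
          rewrite ?(negbTE li) /= ?(eq_sym i c) ?(negbTE ic) ?(negbTE ci) ?(negbTE lc) /=.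
          exact: Hl.
        + rewrite ?(eq_sym c i) ?(negbTE ic) ?(negbTE ci) /=.
          match goal with |- context [leafset ?f] => have E : #|leafset a| = #|leafset f|.+1;
            [apply: (@leafset_add _ _ f a i) => [|/=|l li /=] | ] end.
            - by rewrite Ei.
            - by rewrite ?eqxx Ei /= ?eqxx.
            rewrite ?(negbTE li) /=.
            case: (eqVneq l c) => [->|lc] //=.
            by case: Hc => ->.
          rewrite E in Hp.
          rewrite eqxx; by case: Hc Hp => -> /=; move: (odd #|leafset _|) => [].
      - have jj' : j != j' by rewrite eq_sym.
        rewrite ?Some_eqE ?(negbTE jj') /=.
        split; [|split].
        + by rewrite ?(negbTE ic) ?(negbTE ci).
        + move=> l lc; case: (eqVneq l i) => [->|li]; first by rewrite ?eqxx Ei /= ?Some_eqE ?(negbTE jj) ?(negbTE jj'); right.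
          rewrite ?(negbTE li); exact: Hl.
        + rewrite ?(negbTE ic) ?(negbTE ci) (@leafset_eq _ _ a) // => l.
          by case: (eqVneq l i) => [->|li]; rewrite ?eqxx ?Ei /= ?Some_eqE ?(negbTE jj) ?(negbTE jj').
- move=> [Hl Hp].
  case: (Hl i) => [Hi|].
  + rewrite Hi /=; split; [|split].
    * by rewrite ?eqxx Hi; right.
    * move=> l li; rewrite ?(negbTE li) /=.
      exact: (lcqN_ML (Hl l)).
    * rewrite ?eqxx Hi /= (@leafset_eq _ _ a) ?Hp //.
      move=> l; case: (eqVneq l i) => [->|li]; rewrite ?eqxx ?Hi //=.
      by rewrite ?(negbTE li) isL_lcq.
  + case Ei: (a i) => [[j'|]|] //= _.
    case: (eqVneq j' j) => [<-{j}|jj].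
    * rewrite ?eqxx /=; split; [|split].
      - by rewrite ?eqxx Ei /= ?eqxx; left.
      - move=> l li; rewrite ?(negbTE li) /=.
        exact: (lcqN_ML (Hl l)).
      - rewrite ?eqxx Ei /= ?eqxx /=.
        match goal with |- context [leafset ?f] => have E : #|leafset a| = #|leafset f|.+1;
            [apply: (@leafset_add _ _ f a i) => [|/=|l li /=] | ] end.
        + by rewrite Ei.
        + by rewrite ?eqxx Ei /= ?eqxx.
        + by rewrite ?(negbTE li) isL_lcq.
        by move: Hp; rewrite E /= => ->.
    * have jj' : j != j' by rewrite eq_sym.
        rewrite ?Some_eqE ?(negbTE jj') /=; split.
      - move=> l; case: (eqVneq l i) => [->|li]; first by rewrite ?eqxx Ei /= ?Some_eqE ?(negbTE jj) ?(negbTE jj'); right.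
        by rewrite ?(negbTE li).
      - rewrite (@leafset_eq _ _ a) // => l.
        by case: (eqVneq l i) => [->|li]; rewrite ?eqxx ?Ei /= ?Some_eqE ?(negbTE jj) ?(negbTE jj').
Qed.

Lemma lcorbit_inv k n (r : 'I_k) (H : graph ('I_k * 'I_n)%type) :
  H \in lc_orbit (clique_star k n r) -> exists a b, Inv a b /\ H = gof a b.
Proof.
rewrite inE cs_gof => /connectP [p Hp ->].
have I0 : Inv (fun _ : 'I_k => @None (option 'I_n)) (Some r).
  split; first by left.
  split; first by move=> *; left.
  have -> : leafset (fun _ : 'I_k => @None (option 'I_n)) = set0 by apply/setP => i; rewrite !inE.
  by rewrite eqxx cards0.
elim: p (fun _ : 'I_k => @None (option 'I_n)) (Some r) I0 Hp => [|G p IH] a b Iab /=.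
  by move=> _; exists a, b.
case/andP => /existsP [v /eqP ->] Hp.
rewrite lc_gof in Hp *.
exact: (IH _ _ (Inv_step v Iab) Hp).
Qed.

Definition relab {n} (t : {perm 'I_n}) (L : option (option 'I_n)) :=
  if L is Some (Some j) then Some (Some (t j)) else L.

Lemma adjC_relab n (t : {perm 'I_n}) L p q :
  adjC (relab t L) (omap t p) (omap t q) = adjC L p q.
Proof.
case: L => [[c|]|] //=; case: p => [p|]; case: q => [q|] //=;
  rewrite ?Some_eqE ?SN_eqE ?NS_eqE ?(inj_eq perm_inj) //.
Qed.

Lemma adjC_relabSS n (t : {perm 'I_n}) L p q :
  adjC (relab t L) (Some (t p)) (Some (t q)) = adjC L (Some p) (Some q).
Proof. exact: (adjC_relab t L (Some p) (Some q)). Qed.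
Lemma adjC_relabSN n (t : {perm 'I_n}) L p :
  adjC (relab t L) (Some (t p)) None = adjC L (Some p) None.
Proof. exact: (adjC_relab t L (Some p) None). Qed.
Lemma adjC_relabNS n (t : {perm 'I_n}) L p :
  adjC (relab t L) None (Some (t p)) = adjC L None (Some p).
Proof. exact: (adjC_relab t L None (Some p)). Qed.

Lemma adjS_omap k (s : {perm 'I_k}) b i l : adjS (omap s b) (s i) (s l) = adjS b i l.
Proof. by case: b => [c|] //=; rewrite !(inj_eq perm_inj). Qed.

Lemma iso_relab k n (a a' : 'I_k -> option (option 'I_n)) b b'
  (s : {perm 'I_k}) (t : 'I_k -> {perm 'I_n}) :
  (forall i, a' (s i) = relab (t i) (a i)) -> b' = omap s b ->
  graph_iso (gof a b) (gof a' b').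
Proof.
move=> Ha ->.
pose f (x : ('I_k * 'I_n)%type) := (s x.1, t x.1 x.2).
have finj : injective f.
  move=> [x1 x2] [y1 y2] [] /perm_inj E1; subst y1 => /perm_inj -> //.
apply/existsP; exists (perm finj); apply/forallP => x; apply/forallP => y.
rewrite !permE !inE /edgeG /= (inj_eq finj) (inj_eq perm_inj).
case: (eqVneq x.1 y.1) => [E|E] /=.
  by rewrite -E !Ha adjC_relabSS.
by rewrite !Ha adjS_omap adjC_relabSN adjC_relabNS.
Qed.

Lemma iso_refl (T : finType) (G : graph T) : graph_iso G G.
Proof. by apply/existsP; exists 1%g; apply/forallP => x; apply/forallP => y; rewrite !perm1. Qed.

Lemma iso_sym (T : finType) (G H : graph T) : graph_iso G H -> graph_iso H G.
Proof.
case/existsP => p /forallP Hp; apply/existsP; exists (p^-1)%g.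
apply/forallP => x; apply/forallP => y.
by have /forallP/(_ (p^-1 y)%g) := Hp (p^-1 x)%g; rewrite !permKV eq_sym.
Qed.

Lemma iso_trans (T : finType) (G H K : graph T) :
  graph_iso G H -> graph_iso H K -> graph_iso G K.
Proof.
case/existsP => p /forallP Hp; case/existsP => q /forallP Hq.
apply/existsP; exists (p * q)%g; apply/forallP => x; apply/forallP => y.
have /forallP/(_ y)/eqP -> := Hp x.
by have /forallP/(_ (p y)) := Hq (p x); rewrite !permM.
Qed.
Lemma count_enum_card (T : finType) (P : pred T) : count P (Finite.enum T) = #|P|.
Proof. by rewrite cardE /enum_mem size_filter. Qed.

Lemma perm_of_counts k (T : eqType) (g g' : 'I_k -> T) :
  (forall x, #|[pred i | g i == x]| = #|[pred i | g' i == x]|) ->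
  exists s : {perm 'I_k}, forall i, g' (s i) = g i.
Proof.
move=> H.
have : perm_eq (map g (enum 'I_k)) [tuple g' i | i < k].
  apply/allP => x _ /=.
  rewrite /= !count_map !count_enum_card; apply/eqP; exact: (H x).
case/tuple_permP => p Ep; exists p => i.
have := Ep; rewrite /= => /(eq_in_map _ _ _).2 /(_ i).
rewrite mem_enum => /(_ isT) ->.
by rewrite tnth_mktuple.
Qed.

Lemma cnt3 k (c : 'I_k) (L : {set 'I_k}) x : c \notin L ->
  #|[pred i | (if i == c then 0 else if i \in L then 1 else 2) == x]| =
  if x == 0 then 1 else if x == 1 then #|L| else if x == 2 then k - #|L|.+1 else 0.
Proof.
move=> cL; case: x => [|[|[|x]]] /=.
- transitivity #|pred1 c|; last exact: card1.
  apply: eq_card => i; rewrite !inE.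
  by case: (i == c); case: (i \in L).
- apply: eq_card => i; rewrite !inE.
  by case: (eqVneq i c) => [->|]; rewrite ?(negbTE cL) //; case: (i \in L).
- have <- : #|~: (c |: L)| = k - #|L|.+1.
    have := cardsC (c |: L); rewrite cardsU1 cL card_ord /=.
    by move: #|~: _| #|L| => m l; lia.
  apply: eq_card => i; rewrite !inE.
  by case: (i == c); case: (i \in L).
- apply: eq_card0 => i; rewrite !inE.
  by case: (i == c); case: (i \in L).
Qed.

Lemma cnt2 k (L : {set 'I_k}) x :
  #|[pred i | (if i \in L then 1 else 2) == x]| =
  if x == 1 then #|L| else if x == 2 then k - #|L| else 0.
Proof.
case: x => [|[|[|x]]] /=.
- by apply: eq_card0 => i; rewrite !inE; case: (i \in L).
- by apply: eq_card => i; rewrite !inE; case: (i \in L).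
- have <- : #|~: L| = k - #|L|.
    by have := cardsC L; rewrite card_ord; move: #|~: _| #|L| => m l; lia.
  by apply: eq_card => i; rewrite !inE; case: (i \in L).
- by apply: eq_card0 => i; rewrite !inE; case: (i \in L).
Qed.

Definition R1 {k n} (r : 'I_k) (j0 : 'I_n) (X : {set 'I_k}) : 'I_k -> option (option 'I_n) :=
  fun l => if l == r then (if odd #|X| then Some None else None)
           else if l \in X then Some (Some j0) else None.
Definition R2 {k n} (r : 'I_k) (j0 : 'I_n) (X : {set 'I_k}) : 'I_k -> option (option 'I_n) :=
  fun l => if (l == r) || (l \in X) then Some (Some j0) else Some None.

Definition tau {k n} (j0 : 'I_n) (a : 'I_k -> option (option 'I_n)) (i : 'I_k) : {perm 'I_n} :=
  if a i is Some (Some j) then tperm j j0 else 1%g.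

Lemma classify1 k n (r : 'I_k) (j0 : 'I_n) (a : 'I_k -> option (option 'I_n)) (c : 'I_k) (X : {set 'I_k}) :
  Inv a (Some c) -> r \notin X -> #|X| = #|leafset a| ->
  graph_iso (gof a (Some c)) (gof (R1 r j0 X) (Some r)).
Proof.
move=> [Hc [Hl Hp]] rX HX.
have cL : c \notin leafset a by rewrite inE; case: Hc => ->.
pose g' := (fun i => if i == r then 0 else if i \in X then 1 else 2).
pose g := (fun i => if i == c then 0 else if i \in leafset a then 1 else 2).
have [s Hs] : exists s : {perm 'I_k}, forall i, g' (s i) = g i.
  by apply: (@perm_of_counts k nat g g') => x; rewrite /g /g' cnt3 // cnt3 // HX.
apply: (@iso_relab _ _ _ _ _ _ s (tau j0 a)).
  move=> i; have := Hs i; rewrite /R1 /tau /g /g'.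
  case: (eqVneq i c) => [->|ic]; rewrite ?eqxx.
    case: (eqVneq (s c) r) => [_ _|]; last by case: (s c \in X).
    by case: Hc Hp => -> /=; rewrite ?eqxx -HX; case: (odd #|X|).
  case: (eqVneq (s i) r) => [_|_]; first by case: (i \in leafset a).
  rewrite inE.
  case: (Hl i ic) => [->|] /=.
    by case: (s i \in X).
  case: (a i) => [[j|]|] //= _.
  by case: (s i \in X) => // _; rewrite tpermL.
have := Hs c; rewrite /g /g' eqxx /=.
case: (eqVneq (s c) r) => [-> //|_]; by case: (s c \in X).
Qed.

Lemma classify2 k n (r : 'I_k) (j0 : 'I_n) (a : 'I_k -> option (option 'I_n)) (X : {set 'I_k}) :
  Inv a None -> r \notin X -> #|X|.+1 = #|leafset a| ->
  graph_iso (gof a None) (gof (R2 r j0 X) None).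
Proof.
move=> [Hl Hp] rX HX.
have HX' : #|r |: X| = #|leafset a| by rewrite cardsU1 rX.
pose g' := (fun i => if i \in r |: X then 1 else 2).
pose g := (fun i => if i \in leafset a then 1 else 2).
have [s Hs] : exists s : {perm 'I_k}, forall i, g' (s i) = g i.
  by apply: (@perm_of_counts k nat g g') => x; rewrite /g /g' !cnt2 HX'.
apply: (@iso_relab _ _ _ _ _ _ s (tau j0 a)) => //.
move=> i; have := Hs i; rewrite /R2 /tau /g /g' !inE.
case: (Hl i) => [->|] /=.
  by case: ((s i == r) || (s i \in X)).
case: (a i) => [[j|]|] //= _.
by case: ((s i == r) || (s i \in X)) => // _; rewrite tpermL.
Qed.


Lemma step_R1 k n (r : 'I_k) (j0 : 'I_n) (X : {set 'I_k}) i :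
  r \notin X -> i \notin X -> i != r ->
  lc (i, j0) (gof (R1 r j0 X) (Some r)) = gof (R1 r j0 (i |: X)) (Some r).
Proof.
move=> rX iX ir.
have E : R1 r j0 X i = None by rewrite /R1 (negbTE ir) (negbTE iX).
rewrite lc_gof /stepB /= E /= eq_sym (negbTE ir).
apply: eq_gof => l; rewrite /stepA /= E /= /R1 cardsU1 iX /= !inE.
case: (eqVneq l i) => [->|li] /=; first by rewrite (negbTE ir) (negbTE iX).
rewrite (negbTE ir) add0n /=; case: (eqVneq l r) => [Elr|lr] /=.
  by case: (odd #|X|).
by case: (l \in X).
Qed.

Lemma step_R2 k n (r : 'I_k) (j0 : 'I_n) (X : {set 'I_k}) :
  r \notin X -> ~~ odd #|X| ->
  lc (r, j0) (gof (R1 r j0 X) (Some r)) = gof (R2 r j0 X) None.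
Proof.
move=> rX ev.
have E : R1 r j0 X r = None by rewrite /R1 eqxx (negbTE ev).
rewrite lc_gof /stepB /= E /= eqxx.
apply: eq_gof => l; rewrite /stepA /= E /R1 /R2 /=.
case: (eqVneq l r) => [Elr|lr] /=; first by rewrite ?eqxx ?(negbTE ev).
by rewrite eqxx /=; case: (l \in X).
Qed.

Lemma reach_R1 k n (r : 'I_k) (j0 : 'I_n) m : forall X : {set 'I_k},
  #|X| = m -> r \notin X -> gof (R1 r j0 X) (Some r) \in lc_orbit (clique_star k n r).
Proof.
elim: m => [|m IH] X.
  move/eqP; rewrite cards_eq0 => /eqP -> _.
  rewrite inE cs_gof (@eq_gof _ _ _ (fun _ => None)); first exact: connect0.
  by move=> l; rewrite /R1 cards0 /= inE; case: (l == r).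
move=> HX rX.
have : (0 < #|X|) by rewrite HX.
case/card_gt0P => i iX.
have rX' : r \notin X :\ i by rewrite inE negb_and rX orbT.
have ir : i != r by apply: contraNneq rX => <-.
have HX' : #|X :\ i| = m by move: HX; rewrite (cardsD1 i X) iX add1n => -[].
have := IH (X :\ i) HX' rX'.
rewrite !inE => H; apply: connect_trans H _.
apply: connect1; apply/existsP; exists (i, j0).
rewrite step_R1 // ?setD11 //.
by rewrite setD1K.
Qed.

Lemma reach_R2 k n (r : 'I_k) (j0 : 'I_n) (X : {set 'I_k}) :
  r \notin X -> ~~ odd #|X| -> gof (R2 r j0 X) None \in lc_orbit (clique_star k n r).
Proof.
move=> rX ev; have := reach_R1 j0 erefl rX; rewrite !inE => H.
apply: connect_trans H (connect1 _); apply/existsP; exists (r, j0).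
by rewrite step_R2.
Qed.

Definition deg (T : finType) (G : graph T) (x : T) := #|[set y | (x, y) \in G]|.
Definition pend (T : finType) (G : graph T) := [set x | deg G x == 1].
Definition domc (T : finType) (G : graph T) :=
  [exists x, (x \notin pend G) &&
     [forall y, ((y != x) && (y \notin pend G)) ==> ((x, y) \in G)]].

Lemma iso_inv (T : finType) (G H : graph T) :
  graph_iso G H -> #|pend G| = #|pend H| /\ (domc G -> domc H).
Proof.
case/existsP => p /forallP Hp.
have E x y : ((x, y) \in G) = ((p x, p y) \in H).
  by apply/eqP; have /forallP := Hp x; apply.
have Hdeg x : deg H (p x) = deg G x.
  rewrite /deg.
  have -> : [set y | (p x, y) \in H] = p @: [set y | (x, y) \in G].
    apply/setP => y; rewrite -(permKV p y) mem_imset; last exact: perm_inj.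
    by rewrite !inE -E.
  by rewrite card_imset //; apply: perm_inj.
have Hpend : pend H = p @: pend G.
  apply/setP => y; rewrite -(permKV p y) mem_imset; last exact: perm_inj.
  by rewrite !inE Hdeg.
split; first by rewrite Hpend card_imset //; apply: perm_inj.
case/existsP => x /andP [xP /forallP Hx]; apply/existsP; exists (p x).
rewrite Hpend mem_imset ?xP /=; last exact: perm_inj.
apply/forallP => y; rewrite -(permKV p y) mem_imset; last exact: perm_inj.
rewrite (inj_eq (@perm_inj _ p)) -E.
exact: Hx.
Qed.

Lemma two_others k (i : 'I_k) : 2 < k -> exists l1 l2 : 'I_k, [/\ l1 != l2, l1 != i & l2 != i].
Proof.
move=> k3.
have h0 : 0 < k by lia.
have h1 : 1 < k by lia.
pose o0 := Ordinal h0; pose o1 := Ordinal h1; pose o2 := Ordinal k3.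
case: (eqVneq i o0) => [->|i0].
  by exists o1, o2; split; rewrite -val_eqE.
case: (eqVneq i o1) => [->|i1].
  by exists o0, o2; split; rewrite -val_eqE.
by exists o0, o1; split; rewrite -?val_eqE // eq_sym.
Qed.

Lemma deg_ge2 (T : finType) (G : graph T) x y1 y2 :
  y1 != y2 -> (x, y1) \in G -> (x, y2) \in G -> deg G x != 1.
Proof.
move=> y12 h1 h2.
have : #|[set y1; y2]| <= deg G x.
  apply: subset_leq_card; apply/subsetP => y; rewrite !inE.
  by case/orP => /eqP ->.
by rewrite cards2 y12; case: (deg G x) => [|[|]].
Qed.

Lemma deg_1 (T : finType) (G : graph T) x y :
  (forall z, ((x, z) \in G) = (z == y)) -> deg G x == 1.
Proof.
move=> H; rewrite /deg (_ : [set z | (x, z) \in G] = [set y]) ?cards1 //.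
by apply/setP => z; rewrite !inE H.
Qed.

Lemma inG k n (a : 'I_k -> option (option 'I_n)) b x y :
  ((x, y) \in gof a b) = (x != y) && edgeG a b x y.
Proof. by rewrite inE. Qed.

Lemma pend_R1 k n (r : 'I_k) (j0 j1 : 'I_n) (X : {set 'I_k}) :
  2 < k -> j1 != j0 -> r \notin X ->
  pend (gof (R1 r j0 X) (Some r)) = setX X [set~ j0].
Proof.
move=> k3 j10 rX.
apply/setP => -[i j]; rewrite !inE /=.
case: (boolP ((i \in X) && (j != j0))) => [/andP [iX jj]|H].
  have ir : i != r by apply: contraNneq rX => <-.
  apply: (deg_1 (y := (i, j0))) => -[i' j'].
  rewrite inG /edgeG /= xpair_eqE /R1 (negbTE ir) iX /=.
  case: (eqVneq i' i) => [->|ii] /=.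
    rewrite xpair_eqE eqxx /= !Some_eqE (negbTE jj) /=.
    by case: (eqVneq j' j0) => [->|] /=; rewrite ?andbF // andbT.
  by rewrite xpair_eqE (negbTE ii) ?Some_eqE (negbTE jj) /= ?andbF.
apply/negbTE.
case: (eqVneq i r) => [->|ir].
  have [l1 [l2 [l12 l1r l2r]]] := two_others r k3.
  apply: (deg_ge2 (y1 := (l1, j0)) (y2 := (l2, j0))).
  - by rewrite xpair_eqE negb_and l12.
  - rewrite inG /edgeG /= xpair_eqE eq_sym (negbTE l1r) /= /R1 eqxx (negbTE l1r) /=.
    by case: (odd #|X|) => //=; case: (l1 \in X) => //=; rewrite eqxx ?orbT.
  - rewrite inG /edgeG /= xpair_eqE eq_sym (negbTE l2r) /= /R1 eqxx (negbTE l2r) /=.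
    by case: (odd #|X|) => //=; case: (l2 \in X) => //=; rewrite eqxx ?orbT.
apply: (deg_ge2 (y1 := (r, j0)) (y2 := (r, j1))).
- by rewrite xpair_eqE negb_and eq_sym j10 orbT.
- rewrite inG /edgeG /= xpair_eqE (negbTE ir) /= /R1 (negbTE ir) eqxx /=.
  move: H; case: (i \in X) => /= [/negPn/eqP ->|_]; rewrite ?eqxx /=; by case: (odd #|X|).
- rewrite inG /edgeG /= xpair_eqE (negbTE ir) /= /R1 (negbTE ir) eqxx /=.
  move: H; case: (i \in X) => /= [/negPn/eqP ->|_]; rewrite ?eqxx /=; by case: (odd #|X|).
Qed.

Lemma pend_R2 k n (r : 'I_k) (j0 j1 : 'I_n) (X : {set 'I_k}) :
  2 < k -> j1 != j0 ->
  pend (gof (R2 r j0 X) None) = setX (r |: X) [set~ j0].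
Proof.
move=> k3 j10.
apply/setP => -[i j]; rewrite !inE /=.
case: (boolP (((i == r) || (i \in X)) && (j != j0))) => [/andP [iX jj]|H].
  apply: (deg_1 (y := (i, j0))) => -[i' j'].
  rewrite inG /edgeG /= xpair_eqE /R2 iX /=.
  case: (eqVneq i' i) => [->|ii] /=.
    rewrite xpair_eqE eqxx /= !Some_eqE (negbTE jj) /=.
    by case: (eqVneq j' j0) => [->|] /=; rewrite ?andbF // andbT.
  by rewrite xpair_eqE (negbTE ii) ?Some_eqE (negbTE jj) /= ?andbF.
apply/negbTE.
have [l1 [l2 [l12 l1i l2i]]] := two_others i k3.
have E l : l != i -> ((i, j), (l, j0)) \in gof (R2 r j0 X) None.
  move=> li; rewrite inG /edgeG /= xpair_eqE eq_sym (negbTE li) /= /R2.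
  move: H; case: ((i == r) || (i \in X)) => /= [/negPn/eqP ->|_]; rewrite ?eqxx /=;
    by case: ((l == r) || (l \in X)); rewrite /= ?eqxx ?orbT.
apply: (deg_ge2 (y1 := (l1, j0)) (y2 := (l2, j0))); rewrite ?E //.
by rewrite xpair_eqE negb_and l12.
Qed.

Lemma domc_R2 k n (r : 'I_k) (j0 j1 : 'I_n) (X : {set 'I_k}) :
  2 < k -> j1 != j0 -> domc (gof (R2 r j0 X) None).
Proof.
move=> k3 j10; apply/existsP; exists (r, j0).
rewrite (@pend_R2 _ _ r j0 j1 X k3 j10) !inE /=.
apply/andP; split; first by rewrite !eqxx andbF.
apply/forallP => -[i j]; rewrite !inE /= negb_and negbK.
apply/implyP => /andP [yx H].
rewrite /edgeG /= eq_sym yx /= /R2 !eqxx /=.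
case: (eqVneq r i) => [Eri|ri] /=; first by rewrite !eqxx.
rewrite !eqxx /=.
move: H; rewrite (eq_sym i r) (negbTE ri) /=.
case: (i \in X) => /= [/eqP ->|_]; by rewrite ?eqxx ?orbT.
Qed.

Lemma domc_R1 k n (r : 'I_k) (j0 j1 : 'I_n) (X : {set 'I_k}) :
  2 < k -> j1 != j0 -> r \notin X -> odd #|X| -> ~~ domc (gof (R1 r j0 X) (Some r)).
Proof.
move=> k3 j10 rX oX; apply/existsP => -[[i j] /andP [xP /forallP Hx]].
case: (eqVneq i r) => [Eir|ir].
  subst i.
  pose j' := if j == j0 then j1 else j0.
  have jj : j' != j by rewrite /j'; case: (eqVneq j j0) => [->|] //; rewrite eq_sym.
  have := Hx (r, j'); rewrite (@pend_R1 _ _ r j0 j1 X k3 j10 rX) !inE /= (negbTE rX) /= xpair_eqE eqxx /= jj /=.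
  by rewrite /edgeG /= /R1 !eqxx oX /= ?andbF.
have [l1 [l2 [l12 l1r l2r]]] := two_others r k3.
pose l := if l1 == i then l2 else l1.
have li : l != i by rewrite /l; case: (eqVneq l1 i) => [<-|] //; rewrite eq_sym.
have lr : l != r by rewrite /l; case: (l1 == i).
have := Hx (l, j0); rewrite (@pend_R1 _ _ r j0 j1 X k3 j10 rX) !inE /= eqxx andbF /= xpair_eqE (negbTE li) /=.
by rewrite /edgeG /= (eq_sym i l) (negbTE li) /= (negbTE ir) (negbTE lr) /= ?andbF.
Qed.

Definition Xs k (r : 'I_k) m : {set 'I_k} := [set x in take m (enum [set~ r])].

Lemma Xs_r k (r : 'I_k) m : r \notin Xs r m.
Proof.
rewrite inE; apply/negP => /mem_take.
by rewrite mem_enum !inE eqxx.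
Qed.

Lemma card_Xs k (r : 'I_k) m : m <= k.-1 -> #|Xs r m| = m.
Proof.
move=> mk.
rewrite cardsE; move/card_uniqP: (take_uniq m (enum_uniq (mem [set~ r]))) => ->.
by rewrite size_takel // -cardE cardsC1 card_ord.
Qed.

Unset Implicit Arguments.
Theorem theorem16 (k n : nat) (r : 'I_k) :
  3 <= k -> 2 <= n ->
  #|iso_classes (lc_orbit (clique_star k n r))| = uphalf k + k.
Proof.
move=> k3 n2.
have h0 : 0 < n by lia.
have h1 : 1 < n by lia.
pose j0 : 'I_n := Ordinal h0; pose j1 : 'I_n := Ordinal h1.
have j10 : j1 != j0 by rewrite -val_eqE.
have k3' : 2 < k by [].
have Hup e : e < uphalf k -> e.*2 <= k.-1.
  have := odd_double_half k; rewrite uphalf_half -addnn.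
  by case: (odd k) => /=; move: (k./2) => h; lia.
set O := lc_orbit _.
pose rep (i : ('I_k + 'I_(uphalf k))%type) : graph ('I_k * 'I_n)%type :=
  match i with
  | inl s => gof (R1 r j0 (Xs r s)) (Some r)
  | inr e => gof (R2 r j0 (Xs r e.*2)) None
  end.
pose cls (G : graph ('I_k * 'I_n)%type) := [set H in O | graph_iso G H].
have repO i : rep i \in O.
  case: i => [s|e] /=.
    exact: (reach_R1 j0 erefl (Xs_r r s)).
  apply: reach_R2; first exact: Xs_r.
  by rewrite card_Xs ?odd_double // Hup.
have clsE G H : graph_iso G H -> cls G = cls H.
  move=> GH; apply/setP => K; rewrite !inE.
  congr (_ && _); apply/idP/idP => [HK|GK].
    exact: iso_trans (iso_sym GH) HK.
  exact: iso_trans GH GK.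
have cover G : G \in O -> exists i, graph_iso G (rep i).
  move/lcorbit_inv => [a [b [Iab ->]]].
  case: b Iab => [c|] Iab.
    have sk : #|leafset a| <= k.-1.
      have -> : k.-1 = #|[set~ c]| by rewrite cardsC1 card_ord.
      apply: subset_leq_card; apply/subsetP => i.
      rewrite !inE; apply: contraTneq => ->.
      by case: Iab => [[->|->]].
    have slt : #|leafset a| < k by lia.
    exists (inl (Ordinal slt)); apply: classify1 => //; first exact: Xs_r.
    by rewrite card_Xs.
  have [_ Hodd] := Iab.
  have sk : #|leafset a| <= k by have := max_card (mem (leafset a)); rewrite card_ord.
  have Hs := odd_double_half #|leafset a|; rewrite Hodd in Hs.
  have elt : (#|leafset a|)./2 < uphalf k.
    rewrite uphalf_half; have := odd_double_half k; rewrite -addnn in Hs *.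
    by case: (odd k) => /=; move: (k./2) (#|leafset a|./2) Hs sk => h e Hs sk; lia.
  exists (inr (Ordinal elt)); apply: classify2 => //; first exact: Xs_r.
  by rewrite card_Xs ?Hup //= -Hs.
have HI : iso_classes O = [set cls (rep i) | i : ('I_k + 'I_(uphalf k))%type].
  apply/setP => C; apply/imsetP/imsetP => [[G GO ->]|[i _ ->]].
    by have [i Hi] := cover G GO; exists i => //; exact: clsE.
  by exists (rep i); rewrite ?repO.
have pendc i : #|pend (rep i)| = (if i is inr e then e.*2.+1 else (if i is inl s then val s else 0)) * n.-1.
  case: i => [s|e] /=.
    by rewrite (@pend_R1 _ _ r j0 j1 _ k3' j10 (Xs_r r s)) cardsX card_Xs ?cardsC1 ?card_ord //; have := ltn_ord s; lia.
  by rewrite (@pend_R2 _ _ r j0 j1 _ k3' j10) cardsX cardsU1 Xs_r card_Xs ?cardsC1 ?card_ord ?Hup.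
rewrite HI card_imset; last first.
  move=> i i' E.
  have : rep i' \in cls (rep i) by rewrite E inE repO iso_refl.
  rewrite inE => /andP [_ Hiso]; clear E.
  have [Hp Hd] := iso_inv Hiso.
  have [_ Hd'] := iso_inv (iso_sym Hiso).
  rewrite !pendc in Hp.
  have n1 : 0 < n.-1 by lia.
  move/eqP: Hp; rewrite eqn_pmul2r // => /eqP Hp.
  clear Hiso; case: i i' Hp Hd Hd' => [s|e] [s'|e'] /= Hp Hd Hd'.
  - by congr inl; apply: val_inj.
  - have os : odd #|Xs r s| by rewrite card_Xs ?Hp /= ?odd_double //; have := ltn_ord s; lia.
    by move: (@domc_R1 _ _ r j0 j1 _ k3' j10 (Xs_r r s) os); rewrite Hd' // (@domc_R2 _ _ r j0 j1 _ k3' j10).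
  - have os : odd #|Xs r s'| by rewrite card_Xs -?Hp /= ?odd_double //; have := ltn_ord s'; lia.
    by move: (@domc_R1 _ _ r j0 j1 _ k3' j10 (Xs_r r s') os); rewrite Hd // (@domc_R2 _ _ r j0 j1 _ k3' j10).
  - by congr inr; apply: val_inj; move: Hp => [] /double_inj.
by rewrite card_sum !card_ord addnC.
Qed.
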